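(* Let $q\in(0,1)$, let $(R_n(x;q))_{n\in\mathbb{N}_0}$ be the little $q$-Legendre polynomials, and for $x\in\mathbb{R}$ let $\alpha_x(m)=R_m(x;q)$ ($m\in\mathbb{N}_0$). Let $K:=\left\lceil\frac{\log4}{\log\frac{1}{q}}-1\right\rceil$. Then $\alpha_{1-q^n}(n+k)\neq0$ and \[\left|\frac{\alpha_{1-q^n}(n+k+1)}{\alpha_{1-q^n}(n+k)q^{k+1}}\right|<4\] for all $n\in\mathbb{N}_0$ and all $k\in\mathbb{N}_0$ with $k\ge K$. For every $n\in\mathbb{N}_0$, the sequence $(\alpha_{1-q^n}(n+k))_{k\ge K}$ oscillates around its limit $0$, i.e. $\frac{\alpha_{1-q^n}(n+k+1)}{\alpha_{1-q^n}(n+k)}<0$ for all $k\ge K$, and the sequence $(|\alpha_{1-q^n}(n+k)|)_{k\ge K}$ is strictly decreasing. Moreover, \[|\alpha_{1-q^n}(n+K+k)|\le4^kq^{\frac{(2K+k+1)k}{2}}|\alpha_{1-q^n}(n+K)|\le4^kq^{\frac{(2K+k+1)k}{2}}\] for all $n,k\in\mathbb{N}_0$.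
   Context: For $q\in(0,1)$, the little $q$-Legendre polynomials are defined by $R_0(x;q)=1$, $R_1(x;q)=(x-b_0)/a_0$ and $R_1(x;q)R_n(x;q)=a_nR_{n+1}(x;q)+b_nR_n(x;q)+c_nR_{n-1}(x;q)$ for $n\ge1$, where $a_0=\frac{1}{q+1}$, $b_0=\frac{q}{q+1}$, and for $n\ge1$: $a_n=q^n\frac{(1+q)(1-q^{n+1})}{(1-q^{2n+1})(1+q^{n+1})}$, $c_n=q^n\frac{(1+q)(1-q^n)}{(1-q^{2n+1})(1+q^n)}$, $b_n=1-a_n-c_n=\frac{(1-q^n)(1-q^{n+1})}{(1+q^n)(1+q^{n+1})}$. They are normalized by $R_n(1;q)=1$. *)

(* Defs.v *)
From Stdlib Require Import Reals ZArith.
Open Scope R_scope.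

(* Recurrence coefficients of the little q-Legendre polynomials. *)
Definition qa0 (q : R) : R := 1 / (q + 1).
Definition qb0 (q : R) : R := q / (q + 1).
(* for n >= 1 *)
Definition qa (q : R) (n : nat) : R :=
  q ^ n * ((1 + q) * (1 - q ^ (n + 1))) / ((1 - q ^ (2 * n + 1)) * (1 + q ^ (n + 1))).
Definition qc (q : R) (n : nat) : R :=
  q ^ n * ((1 + q) * (1 - q ^ n)) / ((1 - q ^ (2 * n + 1)) * (1 + q ^ n)).
Definition qb (q : R) (n : nat) : R :=
  ((1 - q ^ n) * (1 - q ^ (n + 1))) / ((1 + q ^ n) * (1 + q ^ (n + 1))).

Definition R1 (q x : R) : R := (x - qb0 q) / qa0 q.

(* Rpair q x n = (R_n(x;q), R_{n+1}(x;q)), using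
   R_1 R_n = a_n R_{n+1} + b_n R_n + c_n R_{n-1}  (n >= 1). *)
Fixpoint Rpair (q x : R) (n : nat) : R * R :=
  match n with
  | O => (1, R1 q x)
  | S m =>
      let (u, v) := Rpair q x m in
      (v, ((R1 q x - qb q n) * v - qc q n * u) / qa q n)
  end.

Definition qLeg (q x : R) (n : nat) : R := fst (Rpair q x n).

Definition alpha (q x : R) (m : nat) : R := qLeg q x m.

Definition Rceil (x : R) : Z := (- Int_part (- x))%Z.

(* K = ceil( log 4 / log (1/q) - 1 ); this is >= 0 for q in (0,1). *)
Definition Kq (q : R) : nat := Z.to_nat (Rceil (ln 4 / ln (1 / q) - 1)).

(* Main.v *)
Require Import Defs.
From Stdlib Require Import Reals ZArith Lra Lia Psatz.
From Coquelicot Require Import Coquelicot.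
Open Scope R_scope.

(* Proof via: explicit 2phi1-type closed form of R_m, q-difference equation in the
   point index, orthogonality (finite Green identity + limits) giving
   q^N R_m(1-q^N)^2 <= q^m/(1-q^(2m+1)), and a forward-growth contradiction argument
   for the ratio bounds. *)


Fixpoint Xp (q : R) (m j : nat) : R :=
  match j with O => 1 | S i => Xp q m i * (1 - q ^ i / q ^ m) end.
Fixpoint Yp (q : R) (m j : nat) : R :=
  match j with O => 1 | S i => Yp q m i * (1 - q ^ (m + 1 + i)) end.
Fixpoint Zp (q : R) (j : nat) : R :=
  match j with O => 1 | S i => Zp q i * (q / (1 - q ^ (S i)) ^ 2) end.
Definition cc (q : R) (m j : nat) : R := Xp q m j * Yp q m j * Zp q j.
Definition Pp (q : R) (m M : nat) (y : R) : R := sum_f_R0 (fun j => cc q m j * y ^ j) M.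
Definition P (q : R) (m : nat) (y : R) : R := Pp q m m y.

Lemma pow_n1 (q : R) (n : nat) : q ^ (n + 1) = q ^ n * q.
Proof. rewrite pow_add. simpl. ring. Qed.

Lemma pow_2n (q : R) (n : nat) : q ^ (2 * n) = q ^ n * q ^ n.
Proof. replace (2 * n)%nat with (n + n)%nat by lia. rewrite pow_add. ring. Qed.

Lemma pow_2n1 (q : R) (n : nat) : q ^ (2 * n + 1) = q ^ n * q ^ n * q.
Proof. replace (2 * n + 1)%nat with (n + n + 1)%nat by lia. rewrite !pow_add. simpl. ring. Qed.

Lemma pow_le1 (q : R) (n : nat) : 0 <= q <= 1 -> q ^ n <= 1.
Proof. intro h. rewrite <- (pow1 n). apply pow_incr. lra. Qed.

Lemma pow_lt1 (q : R) (n : nat) : 0 <= q < 1 -> (0 < n)%nat -> q ^ n < 1.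
Proof. intros h hn. apply pow_lt_1_compat; auto. Qed.

Lemma pow_decr (q : R) (m n : nat) : 0 <= q <= 1 -> (m <= n)%nat -> q ^ n <= q ^ m.
Proof.
  intros h hmn. replace n with (m + (n - m))%nat by lia. rewrite pow_add.
  assert (0 <= q ^ m) by (apply pow_le; lra). assert (q ^ (n - m) <= 1) by (apply pow_le1; lra).
  nra.
Qed.

Lemma Xp_shift (q : R) (m j : nat) : q <> 0 ->
  Xp q (S m) (S j) = (1 - 1 / q ^ (S m)) * Xp q m j.
Proof.
  intro hq. induction j as [|j IH].
  - simpl. assert (q ^ m <> 0) by (apply pow_nonzero; auto). field. auto.
  - change (Xp q (S m) (S (S j))) with (Xp q (S m) (S j) * (1 - q ^ (S j) / q ^ (S m))).
    rewrite IH. simpl. assert (q ^ m <> 0) by (apply pow_nonzero; auto). field. auto.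
Qed.

Lemma Yp_shift (q : R) (m j : nat) :
  Yp q m (S j) = (1 - q ^ (S m)) * Yp q (S m) j.
Proof.
  induction j as [|j IH].
  - simpl. replace (m + 1 + 0)%nat with (S m) by lia. simpl. ring.
  - change (Yp q m (S (S j))) with (Yp q m (S j) * (1 - q ^ (m + 1 + S j))).
    rewrite IH. change (Yp q (S m) (S j)) with (Yp q (S m) j * (1 - q ^ (S m + 1 + j))).
    replace (m + 1 + S j)%nat with (S m + 1 + j)%nat by lia. ring.
Qed.

Lemma Xp_vanish (q : R) (m d : nat) : q <> 0 -> Xp q m (S m + d) = 0.
Proof.
  intro hq. induction d as [|d IH].
  - rewrite Nat.add_0_r. simpl. assert (q ^ m <> 0) by (apply pow_nonzero; auto).
    unfold Rdiv. rewrite Rinv_r; auto. ring.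
  - rewrite Nat.add_succ_r. simpl. simpl in IH. rewrite IH. ring.
Qed.

Lemma cc_vanish (q : R) (m j : nat) : q <> 0 -> (m < j)%nat -> cc q m j = 0.
Proof.
  intros hq hj. unfold cc. replace j with (S m + (j - S m))%nat by lia.
  rewrite Xp_vanish; auto. ring.
Qed.

Lemma Pp_ext (q : R) (m M : nat) (y : R) : q <> 0 -> (m <= M)%nat -> Pp q m M y = P q m y.
Proof.
  intros hq hM. induction hM as [|M hM IH].
  - reflexivity.
  - unfold Pp in *. simpl. rewrite IH. rewrite cc_vanish; auto; try lia. ring.
Qed.

Lemma coef_rec (q : R) (p i : nat) : 0 < q -> q < 1 ->
  qa q (S p) * cc q (S (S p)) (S i) + qb q (S p) * cc q (S p) (S i) + qc q (S p) * cc q p (S i)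
  = cc q (S p) (S i) - (1 + q) * cc q (S p) i.
Proof.
  intros hq0 hq1.
  assert (hq : q <> 0) by lra.
  set (u := q ^ (S p)). set (w := q ^ i).
  assert (hu0 : 0 < u) by (apply pow_lt; auto).
  assert (hu1 : u < 1) by (unfold u; apply pow_lt1; [lra| lia]).
  assert (hw0 : 0 < w) by (apply pow_lt; auto).
  assert (hw1 : w <= 1) by (unfold w; apply pow_le1 ; lra) .
  unfold cc.
  set (X := Xp q (S p) i). set (Y := Yp q (S p) i). set (Z := Zp q i).
  assert (E1 : Xp q (S (S p)) (S i) = (1 - 1 / (q * u)) * X).
  { rewrite Xp_shift; auto. }
  assert (hqu : 1 - q * u <> 0) by nra.
  assert (hu1' : 1 - 1 / u <> 0).
  { intro h. assert (1/u > 1). { unfold Rdiv. rewrite Rmult_1_l. rewrite <- Rinv_1. apply Rinv_lt_contravar; lra. } lra. }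
  assert (e1 : q ^ (S p + 1 + i) = q * u * w) by (rewrite !pow_add; unfold u, w; simpl; ring).
  assert (e2 : q ^ (S p + 1 + S i) = q * q * u * w) by (rewrite !pow_add; unfold u, w; simpl; ring).
  assert (e3 : q ^ (S (S p)) = q * u) by (unfold u; simpl; ring).
  assert (e4 : q ^ (S i) = q * w) by (unfold w; simpl; ring).
  assert (E2 : Yp q (S (S p)) (S i) = Y * (1 - q * u * w) * (1 - q * q * u * w) / (1 - q * u)).
  { assert (H := Yp_shift q (S p) (S i)).
    assert (H2 : Yp q (S p) (S (S i)) = Y * (1 - q * u * w) * (1 - q * q * u * w)).
    { change (Yp q (S p) (S (S i))) with (Yp q (S p) i * (1 - q ^ (S p + 1 + i)) * (1 - q ^ (S p + 1 + S i))).
      rewrite e1, e2. reflexivity. }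
    rewrite H2, e3 in H.
    apply (Rmult_eq_reg_l (1 - q * u)); auto. rewrite <- H. field. auto. }
  assert (E3 : Xp q p (S i) = X * (1 - w / u) * (1 - q * w / u) / (1 - 1 / u)).
  { assert (H := Xp_shift q p (S i) hq).
    assert (H2 : Xp q (S p) (S (S i)) = X * (1 - w / u) * (1 - q * w / u)).
    { change (Xp q (S p) (S (S i))) with (Xp q (S p) i * (1 - q ^ i / q ^ (S p)) * (1 - q ^ (S i) / q ^ (S p))).
      rewrite e4. reflexivity. }
    rewrite H2 in H. fold u in H.
    apply (Rmult_eq_reg_l (1 - 1 / u)); auto. rewrite <- H. field. split; lra. }
  assert (E4 : Yp q p (S i) = (1 - u) * Y) by (rewrite Yp_shift; reflexivity).
  assert (E5 : Xp q (S p) (S i) = X * (1 - w / u)) by reflexivity.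
  assert (E6 : Yp q (S p) (S i) = Y * (1 - q * u * w)).
  { change (Yp q (S p) (S i)) with (Yp q (S p) i * (1 - q ^ (S p + 1 + i))). rewrite e1. reflexivity. }
  assert (E7 : Zp q (S i) = Z * (q / (1 - q * w) ^ 2)) by (change (Zp q (S i)) with (Zp q i * (q / (1 - q ^ (S i)) ^ 2)); rewrite e4; reflexivity).
  rewrite E1, E2, E3, E4, E5, E6, E7.
  unfold qa, qb, qc. rewrite !pow_n1, !pow_2n. fold u.
  assert (1 - q * u <> 0) by nra.
  assert (1 - u * u * q <> 0) by nra.
  assert (1 + u * q <> 0) by nra.
  assert (1 + u <> 0) by nra.
  assert (1 - q * w <> 0) by nra.
  assert (1 - u <> 0) by nra.
  assert (u - 1 <> 0) by nra.
  field. repeat split; try lra; nra.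
Qed.

Lemma abc_sum (q : R) (p : nat) : 0 < q -> q < 1 -> qa q (S p) + qb q (S p) + qc q (S p) = 1.
Proof.
  intros hq0 hq1. set (u := q ^ (S p)).
  assert (hu0 : 0 < u) by (apply pow_lt; auto).
  assert (hu1 : u < 1) by (unfold u; apply pow_lt1; [lra| lia]).
  unfold qa, qb, qc. rewrite !pow_n1, !pow_2n. fold u.
  assert (1 - u * u * q <> 0) by nra.
  assert (1 + u * q <> 0) by nra.
  assert (1 + u <> 0) by nra.
  field. repeat split; nra.
Qed.

Lemma sum_lin3 (a b c : R) (f g h : nat -> R) (M : nat) :
  sum_f_R0 (fun j => a * f j + b * g j + c * h j) M
  = a * sum_f_R0 f M + b * sum_f_R0 g M + c * sum_f_R0 h M.
Proof. induction M as [|M IH]; simpl; [ring| rewrite IH; ring]. Qed.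

Lemma sum_lin2 (a b : R) (f g : nat -> R) (M : nat) :
  sum_f_R0 (fun j => a * f j + b * g j) M = a * sum_f_R0 f M + b * sum_f_R0 g M.
Proof. induction M as [|M IH]; simpl; [ring| rewrite IH; ring]. Qed.

Definition shc (f : nat -> R) (j : nat) : R := match j with O => 0 | S i => f i end.

Lemma sum_shift (f : nat -> R) (y : R) (M : nat) :
  sum_f_R0 (fun j => shc f j * y ^ j) (S M) = y * sum_f_R0 (fun j => f j * y ^ j) M.
Proof.
  induction M as [|M IH].
  - simpl. ring.
  - change (sum_f_R0 (fun j => shc f j * y ^ j) (S (S M)))
      with (sum_f_R0 (fun j => shc f j * y ^ j) (S M) + shc f (S (S M)) * y ^ (S (S M))).
    rewrite IH. simpl. ring.
Qed.

Lemma cc0 (q : R) (m : nat) : cc q m 0 = 1.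
Proof. unfold cc. simpl. ring. Qed.

Lemma P_rec (q : R) (p : nat) (y : R) : 0 < q -> q < 1 ->
  qa q (S p) * P q (S (S p)) y + qb q (S p) * P q (S p) y + qc q (S p) * P q p y
  = (1 - (1 + q) * y) * P q (S p) y.
Proof.
  intros hq0 hq1. assert (hq : q <> 0) by lra.
  rewrite <- (Pp_ext q (S p) (S (S p)) y hq) by lia.
  rewrite <- (Pp_ext q p (S (S p)) y hq) by lia.
  unfold P at 1. unfold Pp.
  rewrite <- sum_lin3.
  assert (H : (1 - (1 + q) * y) * sum_f_R0 (fun j => cc q (S p) j * y ^ j) (S (S p))
     = sum_f_R0 (fun j => 1 * (cc q (S p) j * y ^ j) + (- (1 + q)) * (shc (cc q (S p)) j * y ^ j)) (S (S p))).
  { rewrite sum_lin2. rewrite sum_shift.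
    change (sum_f_R0 (fun j => cc q (S p) j * y ^ j) (S p)) with (Pp q (S p) (S p) y).
    change (sum_f_R0 (fun j => cc q (S p) j * y ^ j) (S (S p))) with (Pp q (S p) (S (S p)) y).
    rewrite (Pp_ext q (S p) (S (S p)) y hq) by lia. unfold P. ring. }
  rewrite H. apply sum_eq. intros j hj.
  destruct j as [|i].
  - rewrite !cc0. simpl. rewrite <- (abc_sum q p hq0 hq1). ring.
  - simpl shc. rewrite <- Rmult_assoc, <- Rmult_assoc, <- Rmult_assoc.
    transitivity ((qa q (S p) * cc q (S (S p)) (S i) + qb q (S p) * cc q (S p) (S i) + qc q (S p) * cc q p (S i)) * y ^ S i).
    + ring.
    + rewrite coef_rec; auto. ring.
Qed.

Lemma P0 (q : R) (y : R) : P q 0 y = 1.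
Proof. unfold P, Pp. simpl. unfold cc. simpl. ring. Qed.

Lemma P1 (q : R) (y : R) : 0 < q -> q < 1 -> P q 1 y = 1 - (1 + q) * y.
Proof.
  intros hq0 hq1. unfold P, Pp, cc. simpl.
  assert (1 - q <> 0) by lra. field. split; auto. lra.
Qed.

Lemma Rpair_P (q x : R) (m : nat) : 0 < q -> q < 1 ->
  Rpair q x m = (P q m (1 - x), P q (S m) (1 - x)).
Proof.
  intros hq0 hq1. induction m as [|m IH].
  - simpl. rewrite P0, P1 by auto. f_equal. unfold Defs.R1, qb0, qa0. field. lra.
  - simpl Rpair. rewrite IH. f_equal.
    assert (hR : Defs.R1 q x = 1 - (1 + q) * (1 - x)) by (unfold Defs.R1, qb0, qa0; field; lra).
    rewrite hR.
    assert (ha : 0 < qa q (S m)).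
    { unfold qa. set (u := q ^ S m). assert (0 < u) by (apply pow_lt; auto).
      assert (u < 1) by (unfold u; apply pow_lt1; [lra|lia]).
      assert (0 < q ^ (S m + 1)) by (apply pow_lt; auto).
      assert (q ^ (S m + 1) < 1) by (apply pow_lt1; [lra|lia]).
      assert (0 < q ^ (2 * S m + 1)) by (apply pow_lt; auto).
      assert (q ^ (2 * S m + 1) < 1) by (apply pow_lt1; [lra|lia]).
      apply Rdiv_lt_0_compat; apply Rmult_lt_0_compat; nra. }
    pose proof (P_rec q m (1 - x) hq0 hq1) as H.
    apply (Rmult_eq_reg_l (qa q (S m))); [|lra].
    field_simplify; [|lra]. lra.
Qed.

Lemma alpha_P (q x : R) (m : nat) : 0 < q -> q < 1 -> alpha q x m = P q m (1 - x).
Proof. intros. unfold alpha, qLeg. rewrite Rpair_P; auto. Qed.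


Definition lam (q : R) (m : nat) : R := (1 - q ^ m) * (1 - q ^ (m + 1)) / q ^ m.

Lemma cc_S (q : R) (m i : nat) :
  cc q m (S i) = cc q m i * ((1 - q ^ i / q ^ m) * (1 - q ^ (m + 1 + i)) * (q / (1 - q ^ (S i)) ^ 2)).
Proof. unfold cc. simpl. ring. Qed.

Lemma coef_diff (q : R) (m i : nat) : 0 < q -> q < 1 ->
  lam q m * cc q m i = cc q m (S i) * ((1 - q ^ (S i)) + (1 - 1 / q ^ (S i)))
                       - cc q m i * (q * (1 - q ^ i) + (1 - 1 / q ^ i)).
Proof.
  intros hq0 hq1. rewrite cc_S. unfold lam.
  set (u := q ^ m). set (w := q ^ i).
  assert (0 < u) by (apply pow_lt; auto). assert (0 < w) by (apply pow_lt; auto).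
  assert (w <= 1) by (apply pow_le1; lra).
  replace (q ^ (m + 1 + i)) with (q * u * w) by (rewrite !pow_add; unfold u, w; simpl; ring).
  replace (q ^ (m + 1)) with (q * u) by (rewrite !pow_add; unfold u; simpl; ring).
  replace (q ^ (S i)) with (q * w) by (unfold w; simpl; ring).
  assert (1 - q * w <> 0) by nra.
  field. repeat split; lra.
Qed.

Lemma sum_ext (f g : nat -> R) (M : nat) : (forall j, f j = g j) -> sum_f_R0 f M = sum_f_R0 g M.
Proof. intro h. apply sum_eq. intros; apply h. Qed.

Lemma sum_comb (f1 f2 f3 : nat -> R) (a b : R) (M : nat) :
  a * (sum_f_R0 f1 M - sum_f_R0 f2 M) + b * (sum_f_R0 f1 M - sum_f_R0 f3 M)
  = sum_f_R0 (fun j => a * (f1 j - f2 j) + b * (f1 j - f3 j)) M.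
Proof. induction M as [|M IH]; simpl; [ring | rewrite <- IH; ring]. Qed.

Lemma P_diff (q : R) (m : nat) (z : R) : 0 < q -> q < 1 ->
  lam q m * z * P q m z = (1 - q * z) * (P q m z - P q m (q * z)) + (1 - z) * (P q m z - P q m (z / q)).
Proof.
  intros hq0 hq1. assert (hq : q <> 0) by lra.
  set (g := fun j => cc q m j * ((1 - q ^ j) + (1 - 1 / q ^ j))).
  set (h := fun j => cc q m j * (q * (1 - q ^ j) + (1 - 1 / q ^ j))).
  assert (H1 : (1 - q * z) * (P q m z - P q m (q * z)) + (1 - z) * (P q m z - P q m (z / q))
     = sum_f_R0 (fun j => g j * z ^ j) (S m) - z * sum_f_R0 (fun j => h j * z ^ j) (S m)).
  { rewrite <- !(Pp_ext q m (S m)) by (auto; lia). unfold Pp.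
    rewrite scal_sum.
    rewrite sum_comb, <- minus_sum. apply sum_ext. intro j. unfold g, h.
    rewrite Rpow_mult_distr. unfold Rdiv. rewrite Rpow_mult_distr. rewrite pow_inv.
    assert (q ^ j <> 0) by (apply pow_nonzero; auto). field; auto. }
  rewrite H1.
  assert (H2 : sum_f_R0 (fun j => g j * z ^ j) (S m) = z * sum_f_R0 (fun j => g (S j) * z ^ j) m).
  { rewrite <- sum_shift. apply sum_ext. intro j. destruct j as [|j].
    - unfold g. simpl. field_simplify; auto.
    - reflexivity. }
  assert (H3 : sum_f_R0 (fun j => h j * z ^ j) (S m) = sum_f_R0 (fun j => h j * z ^ j) m).
  { rewrite tech5. cbv beta. replace (h (S m) * z ^ S m) with 0. ring. unfold h. rewrite cc_vanish; auto. ring. }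
  rewrite H2, H3. unfold P, Pp.
  rewrite <- Rmult_minus_distr_l, <- minus_sum.
  rewrite (Rmult_comm (lam q m) z), Rmult_assoc. f_equal.
  rewrite scal_sum.
  apply sum_ext. intro j. unfold g, h. simpl pow. pose proof (coef_diff q m j hq0 hq1) as HC. simpl pow in HC. rewrite Rmult_comm, <- Rmult_assoc, HC. ring.
Qed.


Definition fv (q : R) (m n : nat) : R := P q m (q ^ n).
Definition Dd (q : R) (m n : nat) : R := (1 - q ^ (S n)) * (fv q m (S n) - fv q m n).
Definition Sm (q : R) (m l L : nat) : R := sum_f_R0 (fun n => q ^ n * fv q m n * fv q l n) L.

Lemma diff_n0 (q : R) (m : nat) : 0 < q -> q < 1 -> lam q m * fv q m 0 = - Dd q m 0.
Proof.
  intros hq0 hq1. unfold Dd, fv. pose proof (P_diff q m 1 hq0 hq1) as H.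
  replace (q ^ 0) with 1 by reflexivity. replace (q ^ 1) with q by (simpl; ring).
  replace (q * 1) with q in H by ring. replace (1 - 1) with 0 in H by ring.
  rewrite Rmult_1_r in H. rewrite H. ring.
Qed.

Lemma diff_nS (q : R) (m n : nat) : 0 < q -> q < 1 ->
  lam q m * q ^ (S n) * fv q m (S n) = Dd q m n - Dd q m (S n).
Proof.
  intros hq0 hq1. unfold Dd, fv. pose proof (P_diff q m (q ^ S n) hq0 hq1) as H.
  rewrite H.
  replace (q ^ S n / q) with (q ^ n) by (simpl; field; lra).
  replace (q * q ^ S n) with (q ^ S (S n)) by reflexivity.
  ring.
Qed.

Lemma green (q : R) (m l L : nat) : 0 < q -> q < 1 ->
  (lam q m - lam q l) * Sm q m l L = Dd q l L * fv q m L - Dd q m L * fv q l L.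
Proof.
  intros hq0 hq1. induction L as [|L IH].
  - unfold Sm. simpl sum_f_R0. simpl pow.
    pose proof (diff_n0 q m hq0 hq1). pose proof (diff_n0 q l hq0 hq1).
    transitivity ((lam q m * fv q m 0) * fv q l 0 - (lam q l * fv q l 0) * fv q m 0); [ring|].
    rewrite H, H0. ring.
  - unfold Sm. rewrite tech5. fold (Sm q m l L).
    pose proof (diff_nS q m L hq0 hq1) as E1. pose proof (diff_nS q l L hq0 hq1) as E2.
    transitivity ((lam q m - lam q l) * Sm q m l L
      + (lam q m * q ^ S L * fv q m (S L)) * fv q l (S L) - (lam q l * q ^ S L * fv q l (S L)) * fv q m (S L)); [ring|].
    rewrite IH, E1, E2. unfold Dd. ring.
Qed.

Lemma Pp_near1 (q : R) (m M : nat) (z : R) : Rabs z <= 1 ->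
  Rabs (Pp q m M z - 1) <= sum_f_R0 (fun j => Rabs (cc q m j)) M * Rabs z.
Proof.
  intro hz. induction M as [|M IH].
  - unfold Pp. simpl. rewrite cc0. replace (1 * 1 - 1) with 0 by ring. rewrite Rabs_R0.
    rewrite Rabs_R1. assert (0 <= Rabs z) by apply Rabs_pos. nra.
  - unfold Pp in *. rewrite tech5. cbv beta.
    replace (sum_f_R0 (fun j => cc q m j * z ^ j) M + cc q m (S M) * z ^ S M - 1)
      with ((sum_f_R0 (fun j => cc q m j * z ^ j) M - 1) + cc q m (S M) * z ^ S M) by ring.
    eapply Rle_trans; [apply Rabs_triang|].
    rewrite tech5. cbv beta.
    rewrite Rabs_mult, <- RPow_abs.
    assert (Rabs z ^ S M <= Rabs z).
    { simpl. assert (Rabs z ^ M <= 1) by (apply pow_le1; split; [apply Rabs_pos| auto]).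
      assert (0 <= Rabs z) by apply Rabs_pos. nra. }
    assert (0 <= Rabs (cc q m (S M))) by apply Rabs_pos.
    nra.
Qed.

Lemma lim_1_minus (C : R) (q : R) : 0 < q -> q < 1 ->
  is_lim_seq (fun n => 1 - C * q ^ n) 1 /\ is_lim_seq (fun n => 1 + C * q ^ n) 1.
Proof.
  intros hq0 hq1.
  assert (G : is_lim_seq (fun n => q ^ n) 0) by (apply is_lim_seq_geom; rewrite Rabs_pos_eq; lra).
  split.
  - pose proof (is_lim_seq_minus' _ _ _ _ (is_lim_seq_const 1) (is_lim_seq_scal_l _ C _ G)) as H.
    simpl in H. replace (1 - C * 0) with 1 in H by ring. exact H.
  - pose proof (is_lim_seq_plus' _ _ _ _ (is_lim_seq_const 1) (is_lim_seq_scal_l _ C _ G)) as H.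
    simpl in H. replace (1 + C * 0) with 1 in H by ring. exact H.
Qed.

Lemma fv_lim (q : R) (m : nat) : 0 < q -> q < 1 -> is_lim_seq (fv q m) 1.
Proof.
  intros hq0 hq1. set (C := sum_f_R0 (fun j => Rabs (cc q m j)) m).
  destruct (lim_1_minus C q hq0 hq1) as [H1 H2].
  apply (is_lim_seq_le_le (fun n => 1 - C * q ^ n) _ (fun n => 1 + C * q ^ n)); auto.
  intro n. assert (hz : Rabs (q ^ n) <= 1) by (rewrite Rabs_pos_eq; [apply pow_le1; lra | apply pow_le; lra]).
  pose proof (Pp_near1 q m m (q ^ n) hz) as H. fold C in H.
  rewrite (Rabs_pos_eq (q ^ n)) in H by (apply pow_le; lra).
  unfold fv, P. apply Rabs_le_between' in H. lra.
Qed.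

Lemma geom_lim (q : R) : 0 < q -> q < 1 -> is_lim_seq (fun n => q ^ n) 0.
Proof. intros. apply is_lim_seq_geom; rewrite Rabs_pos_eq; lra. Qed.

Lemma Dd_lim (q : R) (m : nat) : 0 < q -> q < 1 -> is_lim_seq (Dd q m) 0.
Proof.
  intros hq0 hq1. unfold Dd.
  assert (A1 : is_lim_seq (fun n => 1 - q ^ S n) 1).
  { pose proof (is_lim_seq_minus' _ _ _ _ (is_lim_seq_const 1) (proj1 (is_lim_seq_incr_1 _ _) (geom_lim q hq0 hq1))) as H.
    simpl in H. replace (1 - 0) with 1 in H by ring. exact H. }
  assert (A2 : is_lim_seq (fun n => fv q m (S n) - fv q m n) 0).
  { pose proof (is_lim_seq_minus' _ _ _ _ (proj1 (is_lim_seq_incr_1 _ _) (fv_lim q m hq0 hq1)) (fv_lim q m hq0 hq1)) as H.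
    simpl in H. replace (1 - 1) with 0 in H by ring. exact H. }
  pose proof (is_lim_seq_mult' _ _ _ _ A1 A2) as H. replace (1 * 0) with 0 in H by ring. exact H.
Qed.

Lemma lam_step (q : R) (m : nat) : 0 < q -> q < 1 -> lam q m < lam q (S m).
Proof.
  intros hq0 hq1. unfold lam. rewrite !pow_n1. set (u := q ^ m).
  replace (q ^ S m) with (q * u) by reflexivity.
  assert (0 < u) by (apply pow_lt; auto). assert (u <= 1) by (apply pow_le1; lra).
  assert (0 < q * u) by nra. assert (q * u < 1) by nra.
  assert (E : (1 - q * u) * (1 - q * u * q) / (q * u) - (1 - u) * (1 - u * q) / u
    = (1 - q) * (1 - q * u * (q * u)) / (q * u)) by (field; repeat split; nra).
  assert (0 < (1 - q) * (1 - q * u * (q * u)) / (q * u)).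
  { apply Rdiv_lt_0_compat; [|nra]. assert (q * u * (q * u) < 1) by nra. nra. }
  lra.
Qed.

Lemma lam_mono (q : R) (m l : nat) : 0 < q -> q < 1 -> (m < l)%nat -> lam q m < lam q l.
Proof.
  intros hq0 hq1 h. induction h as [|l h IH].
  - apply lam_step; auto.
  - eapply Rlt_trans; [exact IH| apply lam_step; auto].
Qed.

Lemma lam_inj (q : R) (m l : nat) : 0 < q -> q < 1 -> m <> l -> lam q m - lam q l <> 0.
Proof.
  intros hq0 hq1 h. destruct (Nat.lt_gt_cases m l) as [[H|H] _]; auto.
  - pose proof (lam_mono q m l hq0 hq1 H). lra.
  - pose proof (lam_mono q l m hq0 hq1 H). lra.
Qed.

Lemma Sm_lim0 (q : R) (m l : nat) : 0 < q -> q < 1 -> m <> l -> is_lim_seq (Sm q m l) 0.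
Proof.
  intros hq0 hq1 h. pose proof (lam_inj q m l hq0 hq1 h) as hl.
  apply (is_lim_seq_ext (fun L => (Dd q l L * fv q m L - Dd q m L * fv q l L) / (lam q m - lam q l))).
  { intro L. rewrite <- green by auto. field. auto. }
  pose proof (is_lim_seq_minus' _ _ _ _ (is_lim_seq_mult' _ _ _ _ (Dd_lim q l hq0 hq1) (fv_lim q m hq0 hq1))
     (is_lim_seq_mult' _ _ _ _ (Dd_lim q m hq0 hq1) (fv_lim q l hq0 hq1))) as H.
  pose proof (is_lim_seq_div' _ _ _ _ H (is_lim_seq_const (lam q m - lam q l)) hl) as H2.
  simpl in H2. replace ((0 * 1 - 0 * 1) / (lam q m - lam q l)) with 0 in H2 by (field; auto). exact H2.
Qed.

Lemma coef_bounds (q : R) (n : nat) : 0 < q -> q < 1 -> (1 <= n)%nat ->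
  0 < qa q n /\ qa q n <= (1 + q) * q ^ n /\ 0 < qc q n /\ qc q n <= (1 + q) * q ^ n.
Proof.
  intros hq0 hq1 hn. unfold qa, qc. rewrite !pow_n1, !pow_2n. set (u := q ^ n).
  assert (0 < u) by (apply pow_lt; auto). assert (u < 1) by (unfold u; apply pow_lt1; [lra|lia]).
  assert (0 < u * q) by nra. assert (u * q < u) by nra.
  assert (0 < u * u * q) by nra. assert (u * u * q < u * q) by nra.
  assert (0 < 1 - u * u * q) by nra.
  repeat split.
  - apply Rdiv_lt_0_compat; nra.
  - apply Rle_div_l; [nra|].
    assert (0 <= u * (1 + q) * (u * q + (u - u * u * q) + u * u * q * u * q)) by (apply Rmult_le_pos; nra).
    nra.
  - apply Rdiv_lt_0_compat; nra.
  - apply Rle_div_l; [nra|].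
    assert (0 <= u * (1 + q) * (u + u * u * q - u * u * q * u)) by (apply Rmult_le_pos; nra).
    nra.
Qed.

Lemma fv0 (q : R) (n : nat) : fv q 0 n = 1.
Proof. unfold fv. apply P0. Qed.

Lemma fv1 (q : R) (n : nat) : 0 < q -> q < 1 -> fv q 1 n = (1 - (1 + q) * q ^ n) * fv q 0 n.
Proof. intros. rewrite fv0. unfold fv. rewrite P1; auto. ring. Qed.

Definition Um (q : R) (m l L : nat) : R :=
  sum_f_R0 (fun n => q ^ n * (1 - (1 + q) * q ^ n) * fv q m n * fv q l n) L.

Lemma Um_rec (q : R) (p l L : nat) : 0 < q -> q < 1 ->
  Um q (S p) l L = qa q (S p) * Sm q (S (S p)) l L + qb q (S p) * Sm q (S p) l L + qc q (S p) * Sm q p l L.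
Proof.
  intros hq0 hq1. unfold Um, Sm. rewrite <- sum_lin3. apply sum_ext. intro n.
  pose proof (P_rec q p (q ^ n) hq0 hq1) as H. unfold fv.
  transitivity (q ^ n * P q l (q ^ n) * ((1 - (1 + q) * q ^ n) * P q (S p) (q ^ n))); [ring|].
  rewrite <- H. ring.
Qed.

Lemma Um0 (q : R) (l L : nat) : 0 < q -> q < 1 -> Um q 0 l L = Sm q 1 l L.
Proof.
  intros hq0 hq1. unfold Um, Sm. apply sum_ext. intro n. rewrite (fv1 q n) by auto. ring.
Qed.

Lemma Um_sym (q : R) (m l L : nat) : Um q m l L = Um q l m L.
Proof. unfold Um. apply sum_ext. intro n. ring. Qed.

Definition hn (q : R) (m : nat) : R := q ^ m / (1 - q ^ (2 * m + 1)).

Lemma T0_lim (q : R) : 0 < q -> q < 1 -> is_lim_seq (Sm q 0 0) (hn q 0).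
Proof.
  intros hq0 hq1.
  apply (is_lim_seq_ext (fun L => (1 - q * q ^ L) / (1 - q))).
  { intro L. unfold Sm. rewrite (sum_ext _ (fun n => q ^ n)) by (intro n; rewrite fv0; ring).
    pose proof (GP_finite q L) as H. rewrite pow_n1 in H.
    apply (Rmult_eq_reg_r (q - 1)); [|lra]. rewrite H. field. lra. }
  pose proof (is_lim_seq_div' _ _ _ _ (is_lim_seq_minus' _ _ _ _ (is_lim_seq_const 1)
     (is_lim_seq_scal_l _ q _ (geom_lim q hq0 hq1))) (is_lim_seq_const (1 - q)) ltac:(lra)) as H.
  simpl in H. unfold hn. simpl. replace (q * 1 * 1) with q by ring. replace (q * 1) with q by ring.
  replace ((1 - q * 0) / (1 - q)) with (1 / (1 - q)) in H by (field; lra). exact H.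
Qed.

Lemma hn_rec1 (q : R) : 0 < q -> q < 1 -> qc q 1 * hn q 0 = hn q 1.
Proof.
  intros hq0 hq1. unfold qc, hn. simpl.
  assert (1 - q * (q * (q * 1)) <> 0).
  { assert (q * (q * (q * 1)) < 1). { assert (q * q < 1) by nra. nra. } lra. }
  field. repeat split; lra.
Qed.

Lemma hn_rec (q : R) (p : nat) : 0 < q -> q < 1 ->
  qc q (S (S p)) * hn q (S p) / qa q (S p) = hn q (S (S p)).
Proof.
  intros hq0 hq1. unfold qc, qa, hn. rewrite !pow_n1, !pow_2n. set (u := q ^ S p).
  replace (q ^ S (S p)) with (q * u) by reflexivity.
  assert (0 < u) by (apply pow_lt; auto). assert (u < 1) by (unfold u; apply pow_lt1; [lra|lia]).
  assert (0 < q * u) by nra. assert (q * u < 1) by nra.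
  assert (0 < u * u * q) by nra. assert (u * u * q < 1) by nra.
  assert (q * u * (q * u) * q < 1) by (assert (q * u * (q * u) < 1) by nra; nra).
  assert (0 < q * u * (q * u)) by (apply Rmult_lt_0_compat; lra). assert (0 < q * u * (q * u) * q) by (apply Rmult_lt_0_compat; lra).
  field. repeat split; nra.
Qed.

Lemma norm_lim (q : R) (p : nat) : 0 < q -> q < 1 ->
  is_lim_seq (Sm q p p) (hn q p) /\ is_lim_seq (Sm q (S p) (S p)) (hn q (S p)).
Proof.
  intros hq0 hq1. induction p as [|p IH].
  - split; [apply T0_lim; auto|].
    apply (is_lim_seq_ext (fun L => qa q 1 * Sm q 2 0 L + qb q 1 * Sm q 1 0 L + qc q 1 * Sm q 0 0 L)).
    { intro L. rewrite <- (Um_rec q 0 0 L) by auto. rewrite Um_sym, Um0 by auto. reflexivity. }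
    pose proof (is_lim_seq_plus' _ _ _ _ (is_lim_seq_plus' _ _ _ _
       (is_lim_seq_scal_l _ (qa q 1) _ (Sm_lim0 q 2 0 hq0 hq1 ltac:(lia)))
       (is_lim_seq_scal_l _ (qb q 1) _ (Sm_lim0 q 1 0 hq0 hq1 ltac:(lia))))
       (is_lim_seq_scal_l _ (qc q 1) _ (T0_lim q hq0 hq1))) as H.
    simpl in H. rewrite <- hn_rec1 by auto.
    replace (qa q 1 * 0 + qb q 1 * 0 + qc q 1 * hn q 0) with (qc q 1 * hn q 0) in H by ring. exact H.
  - destruct IH as [_ IH]. split; auto.
    destruct (coef_bounds q (S p) hq0 hq1 ltac:(lia)) as [ha _].
    apply (is_lim_seq_ext (fun L => (Um q (S (S p)) (S p) L - qb q (S p) * Sm q (S p) (S (S p)) L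
                                     - qc q (S p) * Sm q p (S (S p)) L) / qa q (S p))).
    { intro L. rewrite <- Um_sym. rewrite (Um_rec q p (S (S p)) L) by auto. field. lra. }
    apply (is_lim_seq_ext (fun L => ((qa q (S (S p)) * Sm q (S (S (S p))) (S p) L + qb q (S (S p)) * Sm q (S (S p)) (S p) L
            + qc q (S (S p)) * Sm q (S p) (S p) L) - qb q (S p) * Sm q (S p) (S (S p)) L
                                     - qc q (S p) * Sm q p (S (S p)) L) / qa q (S p))).
    { intro L. rewrite (Um_rec q (S p) (S p) L) by auto. reflexivity. }
    pose proof (is_lim_seq_plus' _ _ _ _ (is_lim_seq_plus' _ _ _ _
       (is_lim_seq_scal_l _ (qa q (S (S p))) _ (Sm_lim0 q (S (S (S p))) (S p) hq0 hq1 ltac:(lia)))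
       (is_lim_seq_scal_l _ (qb q (S (S p))) _ (Sm_lim0 q (S (S p)) (S p) hq0 hq1 ltac:(lia))))
       (is_lim_seq_scal_l _ (qc q (S (S p))) _ IH)) as H1.
    pose proof (is_lim_seq_minus' _ _ _ _ (is_lim_seq_minus' _ _ _ _ H1
       (is_lim_seq_scal_l _ (qb q (S p)) _ (Sm_lim0 q (S p) (S (S p)) hq0 hq1 ltac:(lia))))
       (is_lim_seq_scal_l _ (qc q (S p)) _ (Sm_lim0 q p (S (S p)) hq0 hq1 ltac:(lia)))) as H2.
    pose proof (is_lim_seq_div' _ _ _ _ H2 (is_lim_seq_const (qa q (S p))) ltac:(lra)) as H3.
    simpl in H3. rewrite <- hn_rec by auto.
    replace ((qa q (S (S p)) * 0 + qb q (S (S p)) * 0 + qc q (S (S p)) * hn q (S p) - qb q (S p) * 0 -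
       qc q (S p) * 0) / qa q (S p)) with (qc q (S (S p)) * hn q (S p) / qa q (S p)) in H3 by (field; lra).
    exact H3.
Qed.

Lemma sum_ge_term (a : nat -> R) (N L : nat) : (forall n, 0 <= a n) -> (N <= L)%nat -> a N <= sum_f_R0 a L.
Proof.
  intros ha h. induction h as [|L h IH].
  - destruct N as [|N]; simpl; [lra|]. pose proof (cond_pos_sum a N ha). lra.
  - rewrite tech5. specialize (ha (S L)). lra.
Qed.

Lemma ortho_bound (q : R) (m N : nat) : 0 < q -> q < 1 ->
  q ^ N * (alpha q (1 - q ^ N) m) ^ 2 <= hn q m.
Proof.
  intros hq0 hq1. rewrite alpha_P by auto. replace (1 - (1 - q ^ N)) with (q ^ N) by ring.
  destruct (norm_lim q m hq0 hq1) as [H _].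
  apply (is_lim_seq_incr_n _ N) in H.
  assert (Hc := is_lim_seq_const (q ^ N * fv q m N * fv q m N)).
  pose proof (is_lim_seq_le _ _ _ _ (fun n => sum_ge_term (fun k => q ^ k * fv q m k * fv q m k) N (n + N)
      (fun k => ltac:(assert (0 < q ^ k) by (apply pow_lt; auto); nra)) ltac:(lia)) Hc H) as HL.
  simpl in HL. unfold fv in HL. unfold Sm, fv in HL. nra.
Qed.


Lemma step_alg (A C d s s' x y z : R) :
  0 < A -> A <= d * s' -> 0 < C -> C <= d * s' -> 0 < d -> 0 < s' <= 1/4 -> 0 < s <= 1/4 ->
  A * z = (A + C - d) * y - C * x -> x <> 0 -> y / x <= - 1 / (4 * s) ->
  y <> 0 /\ z / y <= - 1 / (4 * s').
Proof.
  intros hA hA' hC hC' hd hs' hs E hx hr.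
  assert (hy : y <> 0).
  { intro h. rewrite h in hr. unfold Rdiv in hr. rewrite Rmult_0_l in hr.
    assert (0 < 1 / (4 * s)) by (apply Rdiv_lt_0_compat; lra). lra. }
  split; auto.
  assert (hxy : - 4 * s <= x / y <= 0).
  { assert (H1 : y / x * (x / y) = 1) by (field; auto).
    assert (y / x < 0).
    { assert (0 < 1 / (4 * s)) by (apply Rdiv_lt_0_compat; lra). lra. }
    assert (x / y < 0).
    { destruct (Rlt_or_le (x / y) 0); auto. nra. }
    split; [|lra].
    assert (H2 : y / x * (4 * s) <= -1).
    { apply (Rmult_le_compat_r (4 * s)) in hr; [|lra].
      replace (- 1 / (4 * s) * (4 * s)) with (-1) in hr by (field; lra). lra. }
    nra. }
  assert (Ez : z / y = (A + C - d - C * (x / y)) / A).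
  { assert (hz : z = ((A + C - d) * y - C * x) / A) by (apply (Rmult_eq_reg_l A); [rewrite <- E; field; lra | lra]).
    rewrite hz. field. split; auto; lra. }
  rewrite Ez.
  assert (num : A + C - d - C * (x / y) <= - d / 4).
  { assert (- C * (x / y) <= C) by nra. nra. }
  apply (Rle_trans _ ((- d / 4) / A)).
  { unfold Rdiv. apply Rmult_le_compat_r; [apply Rlt_le, Rinv_0_lt_compat; lra| lra]. }
  apply (Rmult_le_reg_r (4 * s' * A)); [nra|].
  replace (- d / 4 / A * (4 * s' * A)) with (- d * s') by (field; lra).
  replace (- 1 / (4 * s') * (4 * s' * A)) with (- A) by (field; lra).
  lra.
Qed.

Lemma entry_alg (A C d s y z : R) :
  0 < A -> A <= d * s -> 0 < C -> C <= d * s -> 0 < d -> 0 < s <= 1/4 ->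
  A * z = (A + C - d) * y -> y <> 0 -> z / y <= - 1 / (4 * s).
Proof.
  intros hA hA' hC hC' hd hs E hy.
  assert (Ez : z / y = (A + C - d) / A).
  { assert (hz : z = ((A + C - d) * y) / A) by (apply (Rmult_eq_reg_l A); [rewrite <- E; field; lra | lra]).
    rewrite hz. field. split; auto; lra. }
  rewrite Ez.
  apply (Rmult_le_reg_r (4 * s * A)); [nra|].
  replace ((A + C - d) / A * (4 * s * A)) with ((A + C - d) * (4 * s)) by (field; lra).
  replace (- 1 / (4 * s) * (4 * s * A)) with (- A) by (field; lra).
  nra.
Qed.

Lemma entry_alg4 (A C d s x y z : R) :
  0 < A -> A <= d * s -> 0 < C -> C <= d * s -> 0 < d -> 0 < s <= 1/4 ->
  A * z = (A + C - d) * y - C * x -> x <> 0 -> y / x <= - 4 * s ->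
  y <> 0 /\ z / y <= - 1 / (4 * s).
Proof.
  intros hA hA' hC hC' hd hs E hx hr.
  assert (hy : y <> 0).
  { intro h. rewrite h in hr. unfold Rdiv in hr. rewrite Rmult_0_l in hr. lra. }
  split; auto.
  assert (hxy : - 1 / (4 * s) <= x / y <= 0).
  { assert (H1 : y / x * (x / y) = 1) by (field; auto).
    assert (x / y < 0) by (destruct (Rlt_or_le (x / y) 0); auto; nra).
    split; [|lra].
    apply (Rmult_le_reg_r (4 * s)); [lra|].
    replace (- 1 / (4 * s) * (4 * s)) with (-1) by (field; lra). nra. }
  assert (Ez : z / y = (A + C - d - C * (x / y)) / A).
  { assert (hz : z = ((A + C - d) * y - C * x) / A) by (apply (Rmult_eq_reg_l A); [rewrite <- E; field; lra | lra]).
    rewrite hz. field. split; auto; lra. }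
  rewrite Ez.
  assert (hCx : - C * (x / y) <= d / 4).
  { assert (- C * (x / y) <= C * (1 / (4 * s))) by nra.
    assert (C * (1 / (4 * s)) <= d / 4).
    { apply (Rmult_le_reg_r (4 * s)); [lra|].
      replace (C * (1 / (4 * s)) * (4 * s)) with C by (field; lra). nra. }
    lra. }
  apply (Rmult_le_reg_r (4 * s * A)); [nra|].
  replace ((A + C - d - C * (x / y)) / A * (4 * s * A)) with ((A + C - d - C * (x / y)) * (4 * s)) by (field; lra).
  replace (- 1 / (4 * s) * (4 * s * A)) with (- A) by (field; lra).
  assert (A + C - d - C * (x / y) <= - d / 4) by nra.
  nra.
Qed.

Lemma entry_alg_pos (A C d s x y z : R) :
  0 < A -> A <= d * s -> 0 < C -> C <= d * s -> 0 < d -> 0 < s <= 1/4 ->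
  A * z = (A + C - d) * y - C * x -> y <> 0 -> 0 <= x / y -> z / y <= - 1 / (4 * s).
Proof.
  intros hA hA' hC hC' hd hs E hy hxy.
  assert (Ez : z / y = (A + C - d - C * (x / y)) / A).
  { assert (hz : z = ((A + C - d) * y - C * x) / A) by (apply (Rmult_eq_reg_l A); [rewrite <- E; field; lra | lra]).
    rewrite hz. field. split; auto; lra. }
  rewrite Ez.
  apply (Rmult_le_reg_r (4 * s * A)); [nra|].
  replace ((A + C - d - C * (x / y)) / A * (4 * s * A)) with ((A + C - d - C * (x / y)) * (4 * s)) by (field; lra).
  replace (- 1 / (4 * s) * (4 * s * A)) with (- A) by (field; lra).
  assert (0 <= C * (x / y)) by nra.
  nra.
Qed.


Definition al (q : R) (N j : nat) : R := alpha q (1 - q ^ N) j.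

Lemma al_P (q : R) (N j : nat) : 0 < q -> q < 1 -> al q N j = P q j (q ^ N).
Proof. intros. unfold al. rewrite alpha_P by auto. f_equal. ring. Qed.

Lemma al0 (q : R) (N : nat) : 0 < q -> q < 1 -> al q N 0 = 1.
Proof. intros. rewrite al_P by auto. apply P0. Qed.

Lemma al_rec (q : R) (N p : nat) : 0 < q -> q < 1 ->
  qa q (S p) * al q N (S (S p)) = (qa q (S p) + qc q (S p) - (1 + q) * q ^ N) * al q N (S p) - qc q (S p) * al q N p.
Proof.
  intros hq0 hq1. rewrite !al_P by auto.
  pose proof (P_rec q p (q ^ N) hq0 hq1) as H. pose proof (abc_sum q p hq0 hq1) as H2.
  assert (qb q (S p) = 1 - qa q (S p) - qc q (S p)) by lra. rewrite H0 in H. lra.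
Qed.

Lemma al_pair (q : R) (N j : nat) : 0 < q -> q < 1 -> al q N j = 0 -> al q N (S j) = 0 -> False.
Proof.
  intros hq0 hq1. induction j as [|p IH]; intros h1 h2.
  - rewrite al0 in h1 by auto. lra.
  - apply IH; auto. pose proof (al_rec q N p hq0 hq1) as E. rewrite h1, h2 in E.
    destruct (coef_bounds q (S p) hq0 hq1 ltac:(lia)) as [_ [_ [hc _]]].
    assert (qc q (S p) * al q N p = 0) by lra.
    apply Rmult_integral in H. destruct H; auto. lra.
Qed.

Lemma al_decay (q : R) (N : nat) (eps : R) : 0 < q -> q < 1 -> 0 < eps ->
  exists j0, forall j, (j0 <= j)%nat -> Rabs (al q N j) < eps.
Proof.
  intros hq0 hq1 he.
  assert (hy : 0 < eps * eps * q ^ N * (1 - q)) by (assert (0 < q ^ N) by (apply pow_lt; auto); repeat apply Rmult_lt_0_compat; lra).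
  destruct (pow_lt_1_zero q ltac:(rewrite Rabs_pos_eq; lra) _ hy) as [j0 Hj0].
  exists j0. intros j hj. specialize (Hj0 j hj). rewrite Rabs_pos_eq in Hj0 by (apply pow_le; lra).
  pose proof (ortho_bound q j N hq0 hq1) as HB. fold (al q N j) in HB.
  unfold hn in HB.
  assert (0 < q ^ j) by (apply pow_lt; auto).
  assert (q ^ (2 * j + 1) <= q) by (replace q with (q ^ 1) at 2 by ring; apply pow_decr; [lra|lia]).
  assert (0 < q ^ (2 * j + 1)) by (apply pow_lt; auto).
  assert (q ^ j / (1 - q ^ (2 * j + 1)) <= q ^ j / (1 - q)).
  { apply Rmult_le_compat_l; [lra|]. apply Rinv_le_contravar; lra. }
  assert (0 < q ^ N) by (apply pow_lt; auto).
  assert (q ^ N * al q N j ^ 2 < eps * eps * q ^ N).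
  { apply (Rle_lt_trans _ (q ^ j / (1 - q))); [lra|].
    apply (Rmult_lt_reg_r (1 - q)); [lra|]. replace (q ^ j / (1 - q) * (1 - q)) with (q ^ j) by (field; lra). lra. }
  assert (al q N j ^ 2 < eps * eps) by nra.
  destruct (Rlt_or_le (Rabs (al q N j)) eps) as [h|h]; auto.
  exfalso. assert (HH : al q N j ^ 2 = Rabs (al q N j) * Rabs (al q N j)).
  { rewrite <- Rabs_mult. rewrite Rabs_pos_eq; [ring| nra]. }
  nra.
Qed.

Lemma coef_b2 (q : R) (N i : nat) : 0 < q -> q < 1 -> (1 <= N + i)%nat ->
  0 < qa q (N + i) /\ qa q (N + i) <= (1 + q) * q ^ N * q ^ i /\
  0 < qc q (N + i) /\ qc q (N + i) <= (1 + q) * q ^ N * q ^ i.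
Proof.
  intros hq0 hq1 h. destruct (coef_bounds q (N + i) hq0 hq1 h) as [h1 [h2 [h3 h4]]].
  rewrite pow_add in h2, h4. repeat split; lra.
Qed.

Lemma ratio_le_m1 (x y s : R) : x <> 0 -> 0 < s <= 1/4 -> y / x <= - 1 / (4 * s) -> Rabs x <= Rabs y.
Proof.
  intros hx hs hr.
  assert (1 / (4 * s) >= 1).
  { apply Rle_ge. apply (Rmult_le_reg_r (4 * s)); [lra|]. replace (1 / (4 * s) * (4 * s)) with 1 by (field; lra). lra. }
  assert (y / x <= -1) by (unfold Rdiv in *; lra).
  assert (Rabs (y / x) >= 1) by (rewrite Rabs_left; lra).
  replace y with (y / x * x) by (field; auto).
  rewrite Rabs_mult. assert (0 <= Rabs x) by apply Rabs_pos. nra.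
Qed.

Lemma no_grow (q : R) (N i : nat) : 0 < q -> q < 1 -> (1 <= i)%nat -> q ^ i <= 1/4 ->
  al q N (N + i) <> 0 -> al q N (N + i + 1) / al q N (N + i) <= - 1 / (4 * q ^ i) -> False.
Proof.
  intros hq0 hq1 hi hqi h0 hr.
  set (d := (1 + q) * q ^ N). assert (hd : 0 < d) by (unfold d; assert (0 < q ^ N) by (apply pow_lt; auto); nra).
  assert (CL : forall dd, al q N (N + i + dd) <> 0 /\
      al q N (N + i + dd + 1) / al q N (N + i + dd) <= - 1 / (4 * q ^ (i + dd)) /\
      Rabs (al q N (N + i)) <= Rabs (al q N (N + i + dd))).
  { induction dd as [|dd IH].
    - rewrite !Nat.add_0_r. split; auto. split; auto. lra.
    - destruct IH as [hx [hr' habs]].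
      assert (hs : 0 < q ^ (i + dd) <= 1/4).
      { split; [apply pow_lt; auto|]. apply (Rle_trans _ (q ^ i)); [apply pow_decr; [lra| lia]|exact hqi]. }
      assert (hs' : 0 < q ^ (i + S dd) <= 1/4).
      { split; [apply pow_lt; auto|]. apply (Rle_trans _ (q ^ i)); [apply pow_decr; [lra| lia]|exact hqi]. }
      destruct (coef_b2 q N (S (i + dd)) hq0 hq1 ltac:(lia)) as [hA [hA' [hC hC']]].
      replace (N + S (i + dd))%nat with (S (N + i + dd)) in hA, hA', hC, hC' by lia.
      replace (S (i + dd)) with (i + S dd)%nat in hA', hC' by lia.
      pose proof (al_rec q N (N + i + dd) hq0 hq1) as E.
      fold d in E.
      assert (E' : qa q (S (N + i + dd)) * al q N (S (S (N + i + dd))) =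
        (qa q (S (N + i + dd)) + qc q (S (N + i + dd)) - d) * al q N (S (N + i + dd)) - qc q (S (N + i + dd)) * al q N (N + i + dd)) by exact E.
      replace (N + i + dd + 1)%nat with (S (N + i + dd)) in hr' by lia.
      destruct (step_alg _ _ d (q ^ (i + dd)) (q ^ (i + S dd)) _ _ _ hA ltac:(unfold d; lra) hC ltac:(unfold d; lra) hd hs' hs E' hx hr') as [hy hz].
      replace (N + i + S dd)%nat with (S (N + i + dd)) by lia.
      replace (S (N + i + dd) + 1)%nat with (S (S (N + i + dd))) by lia.
      split; auto. split; auto.
      eapply Rle_trans; [exact habs|]. apply (ratio_le_m1 _ _ (q ^ (i + dd))); auto. }
  assert (heps : 0 < Rabs (al q N (N + i))) by (apply Rabs_pos_lt; auto).
  destruct (al_decay q N _ hq0 hq1 heps) as [j0 Hj0].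
  destruct (CL j0) as [_ [_ H]]. specialize (Hj0 (N + i + j0)%nat ltac:(lia)). lra.
Qed.

Lemma ratio_main (q : R) (N k : nat) : 0 < q -> q < 1 -> q ^ (S k) <= 1/4 ->
  al q N (N + k) <> 0 /\
  - 4 * q ^ (S k) < al q N (N + k + 1) / al q N (N + k) < 0.
Proof.
  intros hq0 hq1 hk.
  set (d := (1 + q) * q ^ N). assert (hd : 0 < d) by (unfold d; assert (0 < q ^ N) by (apply pow_lt; auto); nra).
  assert (hs1 : 0 < q ^ S k <= 1/4) by (split; [apply pow_lt; auto| auto]).
  assert (hs2 : 0 < q ^ S (S k) <= 1/4).
  { split; [apply pow_lt; auto|]. apply (Rle_trans _ (q ^ S k)); [apply pow_decr; [lra|lia]| auto]. }
  destruct (coef_b2 q N (S k) hq0 hq1 ltac:(lia)) as [hA [hA' [hC hC']]].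
  replace (N + S k)%nat with (S (N + k)) in hA, hA', hC, hC' by lia.
  destruct (coef_b2 q N (S (S k)) hq0 hq1 ltac:(lia)) as [hA2 [hA2' [hC2 hC2']]].
  replace (N + S (S k))%nat with (S (S (N + k))) in hA2, hA2', hC2, hC2' by lia.
  fold d in hA', hC', hA2', hC2'.
  pose proof (al_rec q N (N + k) hq0 hq1) as E1. fold d in E1.
  pose proof (al_rec q N (S (N + k)) hq0 hq1) as E2. fold d in E2.
  assert (NG1 : forall r, al q N (S (N + k)) <> 0 -> al q N (S (S (N + k))) / al q N (S (N + k)) <= r ->
                 r <= - 1 / (4 * q ^ S k) -> False).
  { intros r h1 h2 h3. apply (no_grow q N (S k) hq0 hq1 ltac:(lia) hk).
    - replace (N + S k)%nat with (S (N + k)) by lia. auto.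
    - replace (N + S k)%nat with (S (N + k)) by lia. replace (S (N + k) + 1)%nat with (S (S (N + k))) by lia. lra. }
  assert (NG2 : al q N (S (S (N + k))) <> 0 -> al q N (S (S (S (N + k)))) / al q N (S (S (N + k))) <= - 1 / (4 * q ^ S (S k)) -> False).
  { intros h1 h2. apply (no_grow q N (S (S k)) hq0 hq1 ltac:(lia) ltac:(lra)).
    - replace (N + S (S k))%nat with (S (S (N + k))) by lia. auto.
    - replace (N + S (S k))%nat with (S (S (N + k))) by lia. replace (S (S (N + k)) + 1)%nat with (S (S (S (N + k)))) by lia. lra. }
  replace (N + k + 1)%nat with (S (N + k)) by lia.
  destruct (Req_dec (al q N (N + k)) 0) as [h0|h0].
  - exfalso. assert (h1 : al q N (S (N + k)) <> 0) by (intro h; apply (al_pair q N (N + k)); auto).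
    rewrite h0 in E1.
    assert (E1' : qa q (S (N + k)) * al q N (S (S (N + k))) = (qa q (S (N + k)) + qc q (S (N + k)) - d) * al q N (S (N + k))) by lra.
    pose proof (entry_alg _ _ d _ _ _ hA hA' hC hC' hd hs1 E1' h1).
    apply (NG1 _ h1 H). lra.
  - split; auto.
    destruct (Rle_or_lt 0 (al q N (S (N + k)) / al q N (N + k))) as [hr|hr].
    + exfalso. destruct (Req_dec (al q N (S (N + k))) 0) as [h1|h1].
      * assert (h2 : al q N (S (S (N + k))) <> 0) by (intro h; apply (al_pair q N (S (N + k))); auto).
        rewrite h1 in E2.
        assert (E2' : qa q (S (S (N + k))) * al q N (S (S (S (N + k)))) = (qa q (S (S (N + k))) + qc q (S (S (N + k))) - d) * al q N (S (S (N + k)))) by lra.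
        pose proof (entry_alg _ _ d _ _ _ hA2 hA2' hC2 hC2' hd hs2 E2' h2).
        apply (NG2 h2 H).
      * assert (hpos : 0 <= al q N (N + k) / al q N (S (N + k))).
        { assert (0 < al q N (S (N + k)) / al q N (N + k)).
          { destruct hr as [hr|hr]; auto. exfalso. symmetry in hr. unfold Rdiv in hr.
            apply Rmult_integral in hr. destruct hr as [hr|hr]; auto. apply Rinv_neq_0_compat in h0. auto. }
          replace (al q N (N + k) / al q N (S (N + k))) with (/ (al q N (S (N + k)) / al q N (N + k))) by (field; auto).
          apply Rlt_le, Rinv_0_lt_compat. auto. }
        pose proof (entry_alg_pos _ _ d _ _ _ _ hA hA' hC hC' hd hs1 E1 h1 hpos).
        apply (NG1 _ h1 H). lra.
    + split; auto.
      destruct (Rle_or_lt (al q N (S (N + k)) / al q N (N + k)) (- 4 * q ^ S k)) as [h4|h4]; auto.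
      exfalso.
      destruct (entry_alg4 _ _ d _ _ _ _ hA hA' hC hC' hd hs1 E1 h0 h4) as [h1 H].
      apply (NG1 _ h1 H). lra.
Qed.


Lemma sum_decomp0 (f : nat -> R) (M : nat) :
  sum_f_R0 f (S M) = f 0%nat + sum_f_R0 (fun i => f (S i)) M.
Proof. induction M as [|M IH]; [simpl; ring| rewrite tech5, IH, tech5; ring]. Qed.

Lemma sum_neg (g : nat -> R) (M : nat) : sum_f_R0 (fun i => - g i) M = - sum_f_R0 g M.
Proof. induction M as [|M IH]; simpl; [ring| rewrite IH; ring]. Qed.

Lemma alt_sum (M : nat) : forall (t : nat -> R), (forall j, 0 <= t (S j) <= t j) -> 0 <= t 0%nat ->
  0 <= sum_f_R0 (fun j => (-1) ^ j * t j) M <= t 0%nat.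
Proof.
  induction M as [|M IH]; intros t ht h0.
  - simpl. lra.
  - rewrite sum_decomp0.
    assert (E : sum_f_R0 (fun i => (-1) ^ (S i) * t (S i)) M = - sum_f_R0 (fun i => (-1) ^ i * t (S i)) M).
    { rewrite <- sum_neg. apply sum_ext. intro i. simpl. ring. }
    rewrite E. simpl pow. rewrite Rmult_1_l.
    destruct (IH (fun i => t (S i))) as [H1 H2].
    + intro j. apply ht.
    + apply ht.
    + pose proof (ht 0%nat). lra.
Qed.

Lemma alpha_diag_bound (q : R) (N : nat) : 0 < q -> q <= 1/4 ->
  0 <= alpha q (1 - q ^ N) N <= 1.
Proof.
  intros hq0 hq1. rewrite alpha_P by lra. replace (1 - (1 - q ^ N)) with (q ^ N) by ring.
  set (t := fun j => (-1) ^ j * cc q N j * (q ^ N) ^ j).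
  assert (Et : forall j, t (S j) = t j * ((q ^ j - q ^ N) * (1 - q ^ (N + 1 + j)) * (q / (1 - q ^ S j) ^ 2))).
  { intro j. unfold t. rewrite cc_S. assert (0 < q ^ N) by (apply pow_lt; auto).
    replace ((-1) ^ (S j)) with (-1 * (-1) ^ j) by reflexivity.
    replace ((q ^ N) ^ (S j)) with (q ^ N * (q ^ N) ^ j) by reflexivity.
    field. split; [|lra]. assert (q ^ S j < 1) by (apply pow_lt1; [lra|lia]). lra. }
  assert (hrho : forall j, (j < N)%nat ->
     0 <= (q ^ j - q ^ N) * (1 - q ^ (N + 1 + j)) * (q / (1 - q ^ S j) ^ 2) <= 1).
  { intros j hj.
    assert (h1 : q ^ N <= q ^ j) by (apply pow_decr; [lra|lia]).
    assert (h2 : q ^ j <= 1) by (apply pow_le1; lra).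
    assert (h3 : 0 < q ^ (N + 1 + j)) by (apply pow_lt; lra).
    assert (h4 : q ^ (N + 1 + j) <= 1) by (apply pow_le1; lra).
    assert (h5 : q ^ S j <= q) by (replace q with (q ^ 1) at 2 by ring; apply pow_decr; [lra|lia]).
    assert (h6 : 0 < q ^ S j) by (apply pow_lt; lra).
    assert (h7 : 0 < q / (1 - q ^ S j) ^ 2) by (apply Rdiv_lt_0_compat; [lra| nra]).
    assert (h8 : q / (1 - q ^ S j) ^ 2 <= 1).
    { apply (Rmult_le_reg_r ((1 - q ^ S j) ^ 2)); [nra|].
      replace (q / (1 - q ^ S j) ^ 2 * (1 - q ^ S j) ^ 2) with q by (field; lra). nra. }
    assert (0 <= (q ^ j - q ^ N) * (1 - q ^ (N + 1 + j))) by nra.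
    assert (0 < q ^ N) by (apply pow_lt; lra). assert ((q ^ j - q ^ N) * (1 - q ^ (N + 1 + j)) <= 1 * 1) by (apply Rmult_le_compat; lra).
    split; nra. }
  assert (tpos : forall j, 0 <= t j).
  { induction j as [|j IH].
    - unfold t. rewrite cc0. simpl. lra.
    - destruct (Nat.lt_ge_cases j N) as [hj|hj].
      + rewrite Et. specialize (hrho j hj). nra.
      + unfold t. rewrite cc_vanish; [|lra|lia]. lra. }
  assert (tdec : forall j, 0 <= t (S j) <= t j).
  { intro j. split; auto. destruct (Nat.lt_ge_cases j N) as [hj|hj].
    + rewrite Et. specialize (hrho j hj). specialize (tpos j). nra.
    + unfold t at 1. rewrite cc_vanish; [|lra|lia]. specialize (tpos j). lra. }
  assert (t0 : t 0%nat = 1) by (unfold t; rewrite cc0; simpl; ring).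
  destruct (alt_sum N t tdec ltac:(lra)) as [H1 H2].
  assert (EP : P q N (q ^ N) = sum_f_R0 (fun j => (-1) ^ j * t j) N).
  { unfold P, Pp. apply sum_ext. intro j. unfold t.
    replace ((-1) ^ j * ((-1) ^ j * cc q N j * (q ^ N) ^ j)) with (((-1) ^ j * (-1) ^ j) * (cc q N j * (q ^ N) ^ j)) by ring.
    rewrite <- Rpow_mult_distr. replace (-1 * -1) with 1 by ring. rewrite pow1. ring. }
  rewrite EP. lra.
Qed.

Lemma Kq_bound (q : R) : 0 < q -> q < 1 -> q ^ S (Kq q) <= 1/4.
Proof.
  intros hq0 hq1. unfold Kq.
  set (r := ln 4 / ln (1 / q) - 1).
  assert (hl : 0 < ln (1 / q)).
  { rewrite <- ln_1. apply ln_increasing; [lra|]. apply (Rmult_lt_reg_r q); [lra|].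
    replace (1 / q * q) with 1 by (field; lra). lra. }
  assert (hc : r <= IZR (Rceil r)).
  { unfold Rceil. rewrite opp_IZR. destruct (base_Int_part (- r)). lra. }
  assert (hK : r <= INR (Z.to_nat (Rceil r))).
  { destruct (Z_lt_le_dec (Rceil r) 0) as [h|h].
    - assert (IZR (Rceil r) < 0) by (apply IZR_lt; auto). pose proof (pos_INR (Z.to_nat (Rceil r))). lra.
    - rewrite INR_IZR_INZ, Z2Nat.id; auto. }
  set (K := Z.to_nat (Rceil r)) in *.
  assert (h4 : ln 4 <= (INR K + 1) * ln (1 / q)).
  { unfold r in hK. apply (Rmult_le_compat_r (ln (1 / q))) in hK; [|lra].
    replace ((ln 4 / ln (1 / q) - 1) * ln (1 / q)) with (ln 4 - ln (1 / q)) in hK by (field; lra). lra. }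
  destruct (Rle_or_lt (q ^ S K) (1/4)) as [h|h]; auto. exfalso.
  assert (0 < q ^ S K) by (apply pow_lt; auto).
  apply ln_increasing in h; [|lra].
  rewrite ln_pow in h by auto. rewrite S_INR in h.
  replace (1 / q) with (/ q) in h4 by (field; lra). rewrite ln_Rinv in h4 by auto.
  replace (1 / 4) with (/ 4) in h by lra. rewrite ln_Rinv in h by lra.
  lra.
Qed.


Lemma ratio_K (q : R) (n k : nat) : 0 < q -> q < 1 -> (Kq q <= k)%nat ->
  al q n (n + k) <> 0 /\ - 4 * q ^ (S k) < al q n (n + k + 1) / al q n (n + k) < 0.
Proof.
  intros hq0 hq1 hk. apply ratio_main; auto.
  apply (Rle_trans _ (q ^ S (Kq q))); [apply pow_decr; [lra|lia]| apply Kq_bound; auto].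
Qed.

Lemma abs_ratio (x y c : R) : x <> 0 -> 0 < c -> - c < y / x < 0 -> Rabs y < c * Rabs x.
Proof.
  intros hx hc hr. replace y with (y / x * x) by (field; auto). rewrite Rabs_mult.
  assert (0 < Rabs x) by (apply Rabs_pos_lt; auto).
  assert (Rabs (y / x) < c) by (rewrite Rabs_left; lra). nra.
Qed.

Lemma absK (q : R) (n : nat) : 0 < q -> q < 1 -> Rabs (al q n (n + Kq q)) <= 1.
Proof.
  intros hq0 hq1. pose proof (Kq_bound q hq0 hq1) as hK.
  destruct (Kq q) as [|K] eqn:eK.
  - simpl in hK. rewrite Nat.add_0_r. unfold al. destruct (alpha_diag_bound q n hq0 ltac:(lra)).
    rewrite Rabs_pos_eq; lra.
  - pose proof (ortho_bound q (n + S K) n hq0 hq1) as HB. fold (al q n (n + S K)) in HB. unfold hn in HB.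
    set (a := al q n (n + S K)) in *.
    assert (hqK : q ^ S K <= 1/2).
    { destruct (Rle_or_lt q (1/2)) as [h|h].
      - apply (Rle_trans _ (q ^ 1)); [apply pow_decr; [lra|lia]| simpl; lra].
      - assert (q ^ S (S K) = q * q ^ S K) by reflexivity. nra. }
    assert (h2 : q ^ (2 * (n + S K) + 1) <= q ^ S K * q ^ S (S K)).
    { rewrite <- pow_add. apply pow_decr; [lra|lia]. }
    assert (0 < q ^ S K) by (apply pow_lt; auto).
    assert (0 < q ^ (2 * (n + S K) + 1)) by (apply pow_lt; auto).
    assert (h3 : q ^ S K + q ^ (2 * (n + S K) + 1) <= 1) by nra.
    assert (0 < q ^ n) by (apply pow_lt; auto).
    rewrite pow_add in HB.
    assert (HB2 : q ^ n * a ^ 2 * (1 - q ^ (2 * (n + S K) + 1)) <= q ^ n * q ^ S K).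
    { apply (Rmult_le_compat_r (1 - q ^ (2 * (n + S K) + 1))) in HB; [|lra].
      replace (q ^ n * q ^ S K / (1 - q ^ (2 * (n + S K) + 1)) * (1 - q ^ (2 * (n + S K) + 1))) with (q ^ n * q ^ S K) in HB by (field; lra).
      exact HB. }
    assert (a ^ 2 * (1 - q ^ (2 * (n + S K) + 1)) <= q ^ S K).
    { apply (Rmult_le_reg_l (q ^ n)); auto. nra. }
    assert (a ^ 2 <= 1) by nra.
    destruct (Rle_or_lt (Rabs a) 1) as [h|h]; auto. exfalso.
    assert (a ^ 2 = Rabs a * Rabs a) by (rewrite <- Rabs_mult; rewrite Rabs_pos_eq; [ring| nra]).
    nra.
Qed.

Lemma exp_step (K k : nat) : (((2 * K + S k + 1) * S k) / 2 = ((2 * K + k + 1) * k) / 2 + (K + k + 1))%nat.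
Proof.
  replace ((2 * K + S k + 1) * S k)%nat with ((2 * K + k + 1) * k + (K + k + 1) * 2)%nat by lia.
  apply Nat.div_add. lia.
Qed.

Theorem lemma2p3 (q : R) (hq0 : 0 < q) (hq1 : q < 1) :
  (forall n k : nat, (Kq q <= k)%nat ->
     alpha q (1 - q ^ n) (n + k) <> 0 /\
     Rabs (alpha q (1 - q ^ n) (n + k + 1) /
           (alpha q (1 - q ^ n) (n + k) * q ^ (k + 1))) < 4) /\
  (forall n : nat, Un_cv (fun k => alpha q (1 - q ^ n) (n + k)) 0) /\
  (forall n k : nat, (Kq q <= k)%nat ->
     alpha q (1 - q ^ n) (n + k + 1) / alpha q (1 - q ^ n) (n + k) < 0) /\
  (forall n k : nat, (Kq q <= k)%nat ->
     Rabs (alpha q (1 - q ^ n) (n + k + 1)) < Rabs (alpha q (1 - q ^ n) (n + k))) /\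
  (forall n k : nat,
     Rabs (alpha q (1 - q ^ n) (n + Kq q + k))
       <= 4 ^ k * q ^ (((2 * Kq q + k + 1) * k) / 2) * Rabs (alpha q (1 - q ^ n) (n + Kq q)) /\
     4 ^ k * q ^ (((2 * Kq q + k + 1) * k) / 2) * Rabs (alpha q (1 - q ^ n) (n + Kq q))
       <= 4 ^ k * q ^ (((2 * Kq q + k + 1) * k) / 2)).
Proof.
  change (alpha q (1 - q ^ ?n) ?j) with (al q n j).
  split; [|split; [|split; [|split]]].
  - intros n k hk. destruct (ratio_K q n k hq0 hq1 hk) as [h0 hr]. split; auto.
    assert (0 < q ^ (k + 1)) by (apply pow_lt; auto).
    replace (k + 1)%nat with (S k) by lia.
    assert (0 < q ^ S k) by (apply pow_lt; auto).
    replace (al q n (n + k + 1) / (al q n (n + k) * q ^ S k)) with ((al q n (n + k + 1) / al q n (n + k)) / q ^ S k)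
      by (field; repeat split; try lra; auto).
    rewrite Rabs_left by (apply Rdiv_neg_pos; lra).
    apply (Rmult_lt_reg_r (q ^ S k)); auto.
    replace (- (al q n (n + k + 1) / al q n (n + k) / q ^ S k) * q ^ S k) with (- (al q n (n + k + 1) / al q n (n + k))) by (field; lra).
    lra.
  - intros n eps heps. destruct (al_decay q n eps hq0 hq1 heps) as [j0 H].
    exists j0. intros k hk. unfold R_dist. rewrite Rminus_0_r. apply H. lia.
  - intros n k hk. destruct (ratio_K q n k hq0 hq1 hk) as [_ hr]. lra.
  - intros n k hk. destruct (ratio_K q n k hq0 hq1 hk) as [h0 hr].
    assert (0 < q ^ S k) by (apply pow_lt; auto).
    assert (q ^ S k <= 1/4).
    { apply (Rle_trans _ (q ^ S (Kq q))); [apply pow_decr; [lra|lia]| apply Kq_bound; auto]. }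
    pose proof (abs_ratio _ (al q n (n + k + 1)) (4 * q ^ S k) h0 ltac:(lra) ltac:(destruct hr; split; lra)).
    assert (0 < Rabs (al q n (n + k))) by (apply Rabs_pos_lt; auto). nra.
  - intros n k. split.
    + induction k as [|k IH].
      * rewrite Nat.mul_0_r, !Nat.add_0_r. simpl. lra.
      * rewrite exp_step, pow_add.
        destruct (ratio_K q n (Kq q + k) hq0 hq1 ltac:(lia)) as [h0 hr].
        assert (0 < q ^ S (Kq q + k)) by (apply pow_lt; auto).
        pose proof (abs_ratio _ (al q n (n + (Kq q + k) + 1)) (4 * q ^ S (Kq q + k)) h0 ltac:(lra) ltac:(destruct hr; split; lra)) as HH.
        replace (n + (Kq q + k) + 1)%nat with (n + Kq q + S k)%nat in HH by lia.
        replace (n + (Kq q + k))%nat with (n + Kq q + k)%nat in HH by lia.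
        replace (Kq q + k + 1)%nat with (S (Kq q + k)) by lia.
        simpl pow at 1.
        assert (0 <= 4 ^ k * q ^ ((2 * Kq q + k + 1) * k / 2)).
        { apply Rmult_le_pos; apply pow_le; lra. }
        nra.
    + assert (0 <= 4 ^ k * q ^ ((2 * Kq q + k + 1) * k / 2)).
      { apply Rmult_le_pos; apply pow_le; lra. }
      pose proof (absK q n hq0 hq1). nra.
Qed.
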